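(* Let $n\ge 4$ be an integer. If $k$ is a positive integer satisfying $$\binom{(k-1)-\lfloor \frac{(n-1)^3}{2}\rfloor-1}{\lfloor\frac{(n-1)^3-1}{2}\rfloor}+\binom{(k-1)-\lfloor \frac{(n-1)^3-1}{2}\rfloor-1}{\lfloor\frac{(n-1)^3}{2}\rfloor}<n^3\le \binom{k-\lfloor \frac{(n-1)^3}{2}\rfloor-1}{\lfloor\frac{(n-1)^3-1}{2}\rfloor}+\binom{k-\lfloor \frac{(n-1)^3-1}{2}\rfloor-1}{\lfloor\frac{(n-1)^3}{2}\rfloor},$$ then $k=(n-1)^3+2$.
   Context: For integers $a$ and $b\ge 0$, $\binom{a}{b}$ denotes the usual binomial coefficient, taken to be $0$ when $a<b$. *)

(* Defs.v *)
From mathcomp Require Import all_boot all_order all_algebra.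
Set Implicit Arguments. Unset Strict Implicit. Unset Printing Implicit Defensive.
Import Order.TTheory GRing.Theory Num.Theory.

(* Binomial coefficient with integer top a and natural bottom b:
   'C(a, b) for a >= 0, and 0 when a < 0 (then a < b since b >= 0). *)
Definition binZ (a : int) (b : nat) : nat :=
  match a with
  | Posz a' => 'C(a', b)
  | Negz _ => 0
  end.

(* Main.v *)
Require Import Defs.
From mathcomp Require Import all_boot all_order all_algebra.
From mathcomp Require Import zify.
Import Order.TTheory GRing.Theory Num.Theory.

Lemma binZ_mono (x y : int) c : (x <= y)%R -> binZ x c <= binZ y c.
Proof.
case: x => [x|x] //; case: y => [y|y] //=.
  by rewrite lez_nat => /leq_bin2l.
Qed.

Lemma binZ_nat (x : int) (y : nat) c : x = Posz y -> binZ x c = 'C(y, c).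
Proof. by move=> ->. Qed.

Lemma C2 x : 'C(x.+2, x) * 2 = x.+2 * x.+1.
Proof.
have -> : 'C(x.+2, x) = 'C(x.+2, 2).
  by rewrite -[in RHS]bin_sub //; have -> : x.+2 - 2 = x by lia.
have -> : 2 = 2`! by [].
rewrite bin_ffact !ffactnS ffactn0 /=. lia.
Qed.

Lemma mbigL n : 4 <= n -> 4 * n ^ 3 <= ((n - 1) ^ 3) ^ 2.
Proof.
move=> hn.
have [p ->] : exists p, n = p + 4 by exists (n - 4); lia.
have -> : p + 4 - 1 = p + 3 by lia.
have h1 : 2 * (p + 4) <= (p + 3) ^ 2 by nia.
have h2 : (2 * (p + 4)) ^ 3 <= ((p + 3) ^ 2) ^ 3 by rewrite leq_exp2r.
rewrite -!expnM mulnC expnM.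
rewrite -expnM mulnC expnM expnMn in h2. nia.
Qed.

Lemma mlt n : 4 <= n -> (n - 1) ^ 3 + 1 < n ^ 3.
Proof.
move=> hn.
have [p ->] : exists p, n = p + 4 by exists (n - 4); lia.
have -> : p + 4 - 1 = p + 3 by lia.
rewrite !expnS expn0 !muln1.
have : (p + 3) * ((p + 3) * (p + 3)) + 1 < (p + 4) * ((p + 4) * (p + 4)).
  rewrite !mulnDl !mulnDr; lia.
done.
Qed.

Theorem proposition6 (n k : nat) (hn : 4 <= n) (hk : 0 < k) :
  binZ ((k%:Z - 1) - (((n - 1) ^ 3) %/ 2)%:Z - 1)%R (((n - 1) ^ 3 - 1) %/ 2)
  + binZ ((k%:Z - 1) - ((((n - 1) ^ 3) - 1) %/ 2)%:Z - 1)%R (((n - 1) ^ 3) %/ 2)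
  < n ^ 3 <=
  binZ (k%:Z - (((n - 1) ^ 3) %/ 2)%:Z - 1)%R (((n - 1) ^ 3 - 1) %/ 2)
  + binZ (k%:Z - ((((n - 1) ^ 3) - 1) %/ 2)%:Z - 1)%R (((n - 1) ^ 3) %/ 2) ->
  k = (n - 1) ^ 3 + 2.
Proof.
set m := (n - 1) ^ 3.
set a := m %/ 2. set b := (m - 1) %/ 2.
have m27 : 27 <= m.
  rewrite /m; have : 3 <= n - 1 by lia.
  by move=> h; have : 3 ^ 3 <= (n - 1) ^ 3 by rewrite leq_exp2r.
have hab : a + b = m - 1 by rewrite /a /b; lia.
have hab2 : b <= a <= b + 1 by rewrite /a /b; lia.
have ek : (k%:Z - 1 = (k - 1)%:Z)%R by lia.
rewrite ek.
set F := fun j : nat => binZ (j%:Z - a%:Z - 1)%R b + binZ (j%:Z - b%:Z - 1)%R a.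
have Fm : forall i j, i <= j -> F i <= F j.
  move=> i j ij; apply: leq_add; apply: binZ_mono; lia.
change (F (k - 1) < n ^ 3 <= F k -> k = m + 2).
have F1 : F (m + 1) = m + 1.
  rewrite /F (@binZ_nat _ b.+1); last by lia.
  rewrite (@binZ_nat _ a.+1); last by lia.
  rewrite !binSn; lia.
have mbig : 4 * n ^ 3 <= m ^ 2 by exact: mbigL.
have F2 : n ^ 3 <= F (m + 2).
  rewrite /F (@binZ_nat _ b.+2); last by lia.
  rewrite (@binZ_nat _ a.+2); last by lia.
  have e1 := C2 a. have e2 := C2 b.
  have ha : m <= 2 * a.+1 by lia.
  have hb : m <= 2 * b.+1 by lia.
  have := leq_mul ha ha. have := leq_mul hb hb.
  move: mbig e1 e2; rewrite -mulnn.
  clear; nia.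
have hmn : m + 1 < n ^ 3.
  exact: mlt.
clearbody F.
move=> /andP[h1 h2].
have [hlt|hge] := ltnP k (m + 2).
  have hk1 : k <= m + 1 by lia.
  have := Fm _ _ hk1; lia.
have [hgt|heq] := ltnP (m + 2) k.
  have hk1 : m + 2 <= k - 1 by lia.
  have := Fm _ _ hk1; lia.
lia.
Qed.
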